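(* Let $p$ be a prime and $\sigma$ a $p$-uniform morphism on $\mathcal A_m$. For every $n\in\mathbb{N}^*$, $$M_{\sigma^n}(T)=M_\sigma(T^{p^{n-1}})M_\sigma(T^{p^{n-2}})\cdots M_\sigma(T).$$
   Context: $\mathcal A_m=\{0,\dots,m-1\}$. For $W=w_0\cdots w_{r-1}\in\mathcal A_m^*$ and $j\in\mathcal A_m$, $\beta_{W,j}(T)=\sum_{i:\,w_i=j}T^{r-1-i}\in\mathbb{F}_p[T]$ (zero if $j$ does not occur). For a uniform morphism $\tau$ on $\mathcal A_m$, $M_\tau(T)=(\beta_{\tau(i),j}(T))_{0\le i,j\le m-1}$; $\sigma^n$ is again uniform (of length $p^n$). *)

(* Defs.v *)
From mathcomp Require Import all_boot all_order all_algebra.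
Set Implicit Arguments. Unset Strict Implicit. Unset Printing Implicit Defensive.
Import GRing.Theory.
Local Open Scope ring_scope.

Definition morph (m : nat) := 'I_m -> seq 'I_m.

Definition morph_word (m : nat) (tau : morph m) (w : seq 'I_m) : seq 'I_m :=
  flatten (map tau w).

Definition morph_iter (m : nat) (sigma : morph m) (n : nat) : morph m :=
  fun a => iter n (morph_word sigma) [:: a].

Definition uniform (m L : nat) (tau : morph m) : Prop :=
  forall a : 'I_m, size (tau a) = L.

Definition beta (R : nzRingType) (m : nat) (W : seq 'I_m) (j : 'I_m) : {poly R} :=
  \sum_(i < size W | nth j W i == j) 'X^(size W - 1 - i).

Definition Mmorph (R : nzRingType) (m : nat) (tau : morph m) : 'M[{poly R}]_m :=
  \matrix_(i, j) beta R (tau i) j.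

Definition mx_subst (R : nzRingType) (m k : nat) (A : 'M[{poly R}]_m) : 'M[{poly R}]_m :=
  map_mx (fun q => q \Po 'X^k) A.

(* M_sigma(T^{p^{n-1}}) M_sigma(T^{p^{n-2}}) ... M_sigma(T) *)
Definition Mprod (R : nzRingType) (m p n : nat) (sigma : morph m) : 'M[{poly R}]_m :=
  foldr (fun k A => mx_subst (p ^ k) (Mmorph R sigma) *m A) 1%:M (rev (iota 0 n)).

(* Main.v *)
Require Import Defs.
From mathcomp Require Import all_boot all_order all_algebra.
Import GRing.Theory.

Section Aux.
Local Open Scope ring_scope.
Variable R : comNzRingType.
Variable m : nat.

Lemma beta_nil (j : 'I_m) : beta R [::] j = 0.
Proof. by rewrite /beta big_ord0. Qed.

Lemma beta_cons (x : 'I_m) W (j : 'I_m) :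
  beta R (x :: W) j = (if x == j then 'X^(size W) else 0) + beta R W j.
Proof.
rewrite /beta /= big_mkcond big_ord_recl /= subn1 /= subn0.
congr (_ + _); rewrite [RHS]big_mkcond; apply: eq_bigr => i _ /=.
by have -> : bump 0 i = i.+1 by []; rewrite add0n -subnDA add1n.
Qed.

Lemma beta_cat (u v : seq 'I_m) (j : 'I_m) :
  beta R (u ++ v) j = beta R u j * 'X^(size v) + beta R v j.
Proof.
elim: u => [|x u IH] /=; first by rewrite beta_nil mul0r add0r.
rewrite !beta_cons IH mulrDl addrA; congr (_ + _).
case: (x == j); last by rewrite mul0r add0r.
by rewrite -exprD size_cat addnC.
Qed.

Lemma size_mw (tau : morph m) L w : uniform L tau ->
  size (morph_word tau w) = (L * size w)%N.
Proof.
move=> H; elim: w => [|x w IH]; first by rewrite muln0.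
by rewrite /morph_word /= size_cat -/(morph_word tau w) IH H mulnS.
Qed.

Lemma key (tau : morph m) L W (j : 'I_m) : uniform L tau ->
  beta R (morph_word tau W) j =
  \sum_k ((beta R W k \Po 'X^L) * beta R (tau k) j).
Proof.
move=> H; elim: W => [|x W IH].
  rewrite /morph_word /= beta_nil big1 // => k _.
  by rewrite beta_nil comp_poly0 mul0r.
rewrite /morph_word /= -/(morph_word tau W) beta_cat IH (size_mw _ _ W H).
under eq_bigr => k _ do rewrite beta_cons comp_polyD mulrDl.
rewrite big_split /=; congr (_ + _).
rewrite (bigD1 x) //= eqxx big1 ?addr0.
  by rewrite comp_Xn_poly -exprM mulrC.
by move=> k; rewrite eq_sym => /negbTE ->; rewrite comp_poly0 mul0r.
Qed.

Lemma mw_cat (tau : morph m) u v :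
  morph_word tau (u ++ v) = morph_word tau u ++ morph_word tau v.
Proof. by rewrite /morph_word map_cat flatten_cat. Qed.

Lemma mw_comp (s t : morph m) w :
  morph_word s (morph_word t w) = morph_word (fun a => morph_word s (t a)) w.
Proof.
elim: w => [|x w IH] //.
by rewrite /morph_word /= -!/(morph_word _ _) mw_cat IH.
Qed.

Lemma iter_mw (s : morph m) n w :
  iter n (morph_word s) w = morph_word (morph_iter s n) w.
Proof.
elim: n w => [|n IH] w /=.
  rewrite /morph_iter /=; elim: w => [|x w IHw] //=.
  by rewrite {1}IHw.
by rewrite IH mw_comp.
Qed.

Lemma iter_uniform (s : morph m) L n : uniform L s ->
  uniform (L ^ n) (morph_iter s n).
Proof.
move=> H a; rewrite /morph_iter; elim: n => [|n IH] //=.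
by rewrite (size_mw _ _ _ H) IH expnS.
Qed.

Lemma Mmorph_iterS (s : morph m) L n : uniform L s ->
  Mmorph R (morph_iter s n.+1) =
  mx_subst (L ^ n) (Mmorph R s) *m Mmorph R (morph_iter s n).
Proof.
move=> H; apply/matrixP => a j; rewrite !mxE.
have -> : morph_iter s n.+1 a = morph_word (morph_iter s n) (s a).
  rewrite /morph_iter iterSr -/(morph_iter s n) iter_mw.
  by rewrite /morph_word /= cats0.
rewrite (key _ _ _ _ (iter_uniform _ _ n H)); apply: eq_bigr => k _.
by rewrite !mxE.
Qed.

Lemma Mmorph0 (s : morph m) : Mmorph R (morph_iter s 0) = 1%:M.
Proof.
apply/matrixP => a j; rewrite !mxE /morph_iter /= beta_cons beta_nil addr0.
by rewrite eq_sym; case: (j == a).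
Qed.

Lemma MprodS p n (s : morph m) :
  Mprod R p n.+1 s = mx_subst (p ^ n) (Mmorph R s) *m Mprod R p n s.
Proof. by rewrite /Mprod -addn1 iotaD rev_cat /=. Qed.

End Aux.

Theorem corollary4p12 (p : nat) (Hp : prime p) (m : nat) (sigma : morph m)
  (Hsigma : uniform p sigma) (n : nat) (Hn : (0 < n)%N) :
  Mmorph 'F_p (morph_iter sigma n) = Mprod 'F_p p n sigma.
Proof.
clear Hn; elim: n => [|n IH]; first by rewrite Mmorph0.
by rewrite (Mmorph_iterS _ _ _ _ n Hsigma) MprodS IH.
Qed.
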